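(* Let $F_3:\mathbb{R}^{d_s}\to\mathbb{R}^{2d_f\times 2d_f}$ and $G_{2,i}:\mathbb{R}^{d_s}\to\mathbb{R}^{2d_f\times 2d_f}$, $i=1,\dots,d_s$, be continuously differentiable, and assume that $F_3(q^s)^T G_{2,i}(q^s)$ is a symmetric matrix for every $q^s\in\mathbb{R}^{d_s}$ and every $i$. Define $\Phi:\mathbb{R}^{d_f}\times\mathbb{R}^{d_f}\times\mathbb{R}^{d_s}\times\mathbb{R}^{d_s}\to$ itself by $\Phi(q^f,p^f,q^s,p^s)=(\tilde q^f,\tilde p^f,\tilde q^s,\tilde p^s)$, where, writing $x=\begin{bmatrix} q^f\\ p^f\end{bmatrix}$, $$\begin{bmatrix}\tilde q^f\\ \tilde p^f\end{bmatrix}=F_3(q^s)\,x,\qquad \tilde q^s=q^s,\qquad \tilde p^s_i=p^s_i-\tfrac12\, x^T F_3(q^s)^T G_{2,i}(q^s)\,x\quad(i=1,\dots,d_s).$$ Then $\Phi$ is symplectic (i.e. $D\Phi(z)^T\mathbb{J}\,D\Phi(z)=\mathbb{J}$ for all $z$) if and only if, for every $q^s$, $F_3(q^s)^T J F_3(q^s)=J$ and $G_{2,i}(q^s)=-J\,\dfrac{\partial F_3}{\partial q^s_i}(q^s)$ for all $i=1,\dots,d_s$.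
   Context: Coordinates are ordered as $(q^f,p^f,q^s,p^s)$ with $q^f,p^f\in\mathbb{R}^{d_f}$, $q^s,p^s\in\mathbb{R}^{d_s}$. $J=\begin{bmatrix}0&I\\-I&0\end{bmatrix}$ denotes the standard symplectic matrix (of size $2d_f$ on the fast variables and of size $2d_s$ on the slow variables, with $I$ the identity of the appropriate size), and $\mathbb{J}=\begin{bmatrix}J&0\\0&J\end{bmatrix}$ is the canonical symplectic matrix on the full phase space. A map is symplectic if its Jacobian $D\Phi$ satisfies $D\Phi^T\mathbb{J}D\Phi=\mathbb{J}$; a matrix $F$ is symplectic if $F^TJF=J$. *)

(* Defs.v *)
From Stdlib Require Import Reals.
From mathcomp Require Import ssreflect ssrfun ssrbool eqtype ssrnat seq fintype bigop.

Set Implicit Arguments.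
Unset Strict Implicit.

Local Open Scope R_scope.

Definition vec (n : nat) := 'I_n -> R.
Definition mat (m n : nat) := 'I_m -> 'I_n -> R.

Definition meq (m n : nat) (A B : mat m n) : Prop := forall i j, A i j = B i j.

Definition mmul (m n p : nat) (A : mat m n) (B : mat n p) : mat m p :=
  fun i j => \big[Rplus/0]_(k < n) (A i k * B k j).

Definition mtr (m n : nat) (A : mat m n) : mat n m := fun i j => A j i.

Definition mopp (m n : nat) (A : mat m n) : mat m n := fun i j => - A i j.

Definition mvmul (m n : nat) (A : mat m n) (x : vec n) : vec m :=
  fun i => \big[Rplus/0]_(k < n) (A i k * x k).

Definition quad (n : nat) (A : mat n n) (x : vec n) : R :=
  \big[Rplus/0]_(a < n) \big[Rplus/0]_(b < n) (x a * A a b * x b).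

Definition symmetric_mx (n : nat) (A : mat n n) : Prop := forall i j, A i j = A j i.

(* J = [[0, I], [-I, 0]] of size 2n *)
Definition Jmat (n : nat) : mat (n + n)%N (n + n)%N :=
  fun i j =>
    match split i, split j with
    | inl a, inr b => if a == b then 1 else 0
    | inr a, inl b => if a == b then -1 else 0
    | _, _ => 0
    end.
Arguments Jmat : clear implicits.

(* canonical symplectic matrix on the full phase space (q^f,p^f,q^s,p^s) *)
Definition bigJ (df ds : nat) : mat (df + df + (ds + ds))%N (df + df + (ds + ds))%N :=
  fun i j =>
    match split i, split j with
    | inl a, inl b => Jmat df a b
    | inr a, inr b => Jmat ds a b
    | _, _ => 0
    end.
Arguments bigJ : clear implicits.

Definition symplectic_mx (n : nat) (F : mat (n + n)%N (n + n)%N) : Prop :=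
  meq (mmul (mtr F) (mmul (Jmat n) F)) (Jmat n).

Definition shift (n : nat) (x : vec n) (i : 'I_n) (t : R) : vec n :=
  fun k => x k + (if k == i then t else 0).

Definition has_partial (n : nat) (f : vec n -> R) (x : vec n) (i : 'I_n) (l : R) : Prop :=
  derivable_pt_lim (fun t => f (shift x i t)) 0 l.

Definition continuous_vec (n : nat) (g : vec n -> R) : Prop :=
  forall x eps, 0 < eps -> exists delta, 0 < delta /\
    forall y : vec n, (forall k, Rabs (y k - x k) < delta) -> Rabs (g y - g x) < eps.

Definition C1_vec (n : nat) (f : vec n -> R) : Prop :=
  exists df : 'I_n -> vec n -> R,
    (forall i x, has_partial f x i (df i x)) /\ (forall i, continuous_vec (df i)).

Definition Phi (df ds : nat)
    (F3 : vec ds -> mat (df + df)%N (df + df)%N)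
    (G2 : 'I_ds -> vec ds -> mat (df + df)%N (df + df)%N)
    (z : vec (df + df + (ds + ds))%N) : vec (df + df + (ds + ds))%N :=
  let x : vec (df + df)%N := fun a => z (lshift (ds + ds)%N a) in
  let qs : vec ds := fun i => z (rshift (df + df)%N (lshift ds i)) in
  let ps : vec ds := fun i => z (rshift (df + df)%N (rshift ds i)) in
  fun k =>
    match split k with
    | inl a => mvmul (F3 qs) x a
    | inr b =>
        match split b with
        | inl i => qs i
        | inr i => ps i - / 2 * quad (mmul (mtr (F3 qs)) (G2 i qs)) x
        end
    end.

Definition symplectic_map (df ds : nat)
    (Psi : vec (df + df + (ds + ds))%N -> vec (df + df + (ds + ds))%N) : Prop :=
  forall (z : vec (df + df + (ds + ds))%N)
         (D : mat (df + df + (ds + ds))%N (df + df + (ds + ds))%N),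
    (forall a b, has_partial (fun w => Psi w a) z b (D a b)) ->
    meq (mmul (mtr D) (mmul (bigJ df ds) D)) (bigJ df ds).

(* Main.v *)
Require Import Defs.
From HB Require Import structures.
From Stdlib Require Import Reals Lra ClassicalEpsilon FunctionalExtensionality.
From mathcomp Require Import ssreflect ssrfun ssrbool eqtype ssrnat seq choice fintype bigop.
From mathcomp Require Import ssralg matrix.

Set Implicit Arguments. Unset Strict Implicit.
Import GRing.Theory.
Local Open Scope R_scope.

Definition Reqb (x y : R) : bool := if Req_EM_T x y then true else false.
Lemma ReqbP : Equality.axiom Reqb.
Proof. move=> x y; rewrite /Reqb; case: Req_EM_T => h; [exact: ReflectT|exact: ReflectF]. Qed.
HB.instance Definition _ := hasDecEq.Build R ReqbP.

Definition Rfind (P : pred R) (n : nat) : option R :=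
  match excluded_middle_informative (exists x, P x) with
  | left h => Some (proj1_sig (constructive_indefinite_description _ h))
  | right _ => None end.
Lemma Rfind_correct P n x : Rfind P n = Some x -> P x.
Proof. rewrite /Rfind; case: excluded_middle_informative => // h [<-].
exact: (proj2_sig (constructive_indefinite_description _ h)). Qed.
Lemma Rfind_complete (P : pred R) : (exists x, P x) -> exists n, Rfind P n.
Proof. move=> h; exists 0%N; rewrite /Rfind; case: excluded_middle_informative => //. Qed.
Lemma Rfind_ext (P Q : pred R) : P =1 Q -> Rfind P =1 Rfind Q.
Proof. move=> h; have -> : P = Q by apply: functional_extensionality. by []. Qed.
HB.instance Definition _ := hasChoice.Build R Rfind_correct Rfind_complete Rfind_ext.

Lemma R_addA : associative Rplus. Proof. move=> x y z; lra. Qed.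
Lemma R_mulA : associative Rmult. Proof. move=> x y z; lra. Qed.
Lemma R_addNr : left_inverse 0 Ropp Rplus. Proof. move=> x; lra. Qed.
HB.instance Definition _ := GRing.isZmodule.Build R R_addA Rplus_comm Rplus_0_l R_addNr.
Lemma R_oner : (1 : R) != 0. Proof. apply/eqP; lra. Qed.
Lemma R_mulrDl : left_distributive Rmult Rplus. Proof. move=> x y z; lra. Qed.
HB.instance Definition _ := GRing.Zmodule_isComNzRing.Build R R_mulA Rmult_comm Rmult_1_l R_mulrDl R_oner.
Lemma R_mulVf (x : R) : x != 0 -> / x * x = 1.
Proof. move/eqP=> h; field; exact h. Qed.
HB.instance Definition _ := GRing.ComNzRing_isField.Build R R_mulVf Rinv_0.

Lemma RplusE : Rplus = @GRing.add R. Proof. by []. Qed.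
Lemma RmultE : Rmult = @GRing.mul R. Proof. by []. Qed.
Lemma RoppE : Ropp = @GRing.opp R. Proof. by []. Qed.
Lemma R0E : (IZR 0) = (0%R : R). Proof. by []. Qed.
Lemma R1E : (IZR 1) = (1%R : R). Proof. by []. Qed.
Lemma RinvE : Rinv = @GRing.inv R. Proof. by []. Qed.
Lemma RminusE (x y : R) : x - y = (x - y)%R. Proof. by []. Qed.
Lemma bigRE n (f : 'I_n -> R) : \big[Rplus/0]_(k < n) f k = (\sum_(k < n) f k)%R.
Proof. by []. Qed.


Section Part_L1.
Local Open Scope R_scope.

Lemma dext (f g : R -> R) x l : (forall t, f t = g t) -> derivable_pt_lim g x l -> derivable_pt_lim f x l.
Proof. by move=> h; have -> : f = g by apply: functional_extensionality. Qed.

Lemma dtrans (phi : R -> R) s0 l :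
  derivable_pt_lim (fun h => phi (s0 + h)) 0 l -> derivable_pt_lim phi s0 l.
Proof.
move=> H eps He; case: (H eps He) => d Hd; exists d => h h0 hd.
have := Hd h h0 hd; by rewrite Rplus_0_l Rplus_0_r.
Qed.

Lemma dtrans' (phi : R -> R) s0 l :
  derivable_pt_lim phi s0 l -> derivable_pt_lim (fun h => phi (s0 + h)) 0 l.
Proof.
move=> H eps He; case: (H eps He) => d Hd; exists d => h h0 hd.
rewrite Rplus_0_l Rplus_0_r; exact: Hd.
Qed.

Lemma dconst (c x : R) : derivable_pt_lim (fun _ => c) x 0.
Proof. exact: derivable_pt_lim_const. Qed.

Lemma dplus f g x l1 l2 : derivable_pt_lim f x l1 -> derivable_pt_lim g x l2 ->
  derivable_pt_lim (fun t => f t + g t) x (l1 + l2).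
Proof. exact: derivable_pt_lim_plus. Qed.
Lemma dminus f g x l1 l2 : derivable_pt_lim f x l1 -> derivable_pt_lim g x l2 ->
  derivable_pt_lim (fun t => f t - g t) x (l1 - l2).
Proof. exact: derivable_pt_lim_minus. Qed.
Lemma dmult f g x l1 l2 : derivable_pt_lim f x l1 -> derivable_pt_lim g x l2 ->
  derivable_pt_lim (fun t => f t * g t) x (l1 * g x + f x * l2).
Proof. exact: derivable_pt_lim_mult. Qed.
Lemma dscal f x l c : derivable_pt_lim f x l -> derivable_pt_lim (fun t => c * f t) x (c * l).
Proof. exact: derivable_pt_lim_scal. Qed.
Lemma dlin c d x : derivable_pt_lim (fun t => c + t * d) x d.
Proof.
rewrite -[d]Rplus_0_l; apply: dplus; first exact: dconst.
rewrite Rplus_0_l -{2}[d]Rmult_1_l.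
exact: (derivable_pt_lim_scal_right id x 1 d (derivable_pt_lim_id x)).
Qed.

Lemma dsum_seq (I : Type) (r : seq I) (f : I -> R -> R) (l : I -> R) x :
  (forall k, derivable_pt_lim (f k) x (l k)) ->
  derivable_pt_lim (fun t => \big[Rplus/0]_(k <- r) f k t) x (\big[Rplus/0]_(k <- r) l k).
Proof.
move=> H; elim: r => [|a r IH].
  apply: (@dext _ (fun _ => 0)) => [t|]; first by rewrite big_nil.
  by rewrite big_nil; exact: dconst.
apply: (@dext _ (fun t => f a t + \big[Rplus/0]_(k <- r) f k t)) => [t|]; first by rewrite big_cons.
rewrite big_cons; exact: dplus.
Qed.

Lemma dsum n (f : 'I_n -> R -> R) (l : 'I_n -> R) x :
  (forall k, derivable_pt_lim (f k) x (l k)) ->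
  derivable_pt_lim (fun t => \big[Rplus/0]_(k < n) f k t) x (\big[Rplus/0]_(k < n) l k).
Proof. exact: dsum_seq. Qed.

End Part_L1.

Section Part_L2.
Local Open Scope R_scope.

Lemma shift_shift n (x : vec n) i s h : shift (shift x i s) i h = shift x i (s + h).
Proof. apply: functional_extensionality => k; rewrite /shift; case: (k == i); ring. Qed.
Lemma shiftC n (x : vec n) i j s t : shift (shift x i s) j t = shift (shift x j t) i s.
Proof. apply: functional_extensionality => k; rewrite /shift; ring. Qed.
Lemma shift0 n (x : vec n) i : shift x i 0 = x.
Proof. apply: functional_extensionality => k; rewrite /shift; case: (k == i); ring. Qed.

Lemma part_at n (f fi : vec n -> R) (P : vec n) i s0 :
  (forall q, has_partial f q i (fi q)) ->
  derivable_pt_lim (fun s => f (shift P i s)) s0 (fi (shift P i s0)).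
Proof.
move=> H; apply: dtrans; have := H (shift P i s0); rewrite /has_partial.
apply: dext => h; by rewrite shift_shift.
Qed.

Lemma part_uniq n (f : vec n -> R) q i l1 l2 :
  has_partial f q i l1 -> has_partial f q i l2 -> l1 = l2.
Proof. exact: uniqueness_limite. Qed.

Lemma schwarz n (f fi fj fij fji : vec n -> R) (i j : 'I_n) q :
 (forall q, has_partial f q i (fi q)) -> (forall q, has_partial f q j (fj q)) ->
 (forall q, has_partial fi q j (fij q)) -> (forall q, has_partial fj q i (fji q)) ->
 continuous_vec fij -> continuous_vec fji -> fij q = fji q.
Proof.
move=> Hi Hj Hij Hji Cij Cji.
case: (eqVneq i j) => [eij|nij].
  subst j.
  have efi : forall q, fi q = fj q by move=> q'; exact: (part_uniq (Hi q') (Hj q')).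
  apply: (part_uniq (Hij q)); have := Hji q; rewrite /has_partial.
  by apply: dext => t; rewrite efi.
pose P s t := shift (shift q i s) j t.
have key : forall h, 0 < h -> exists a b c d,
    0 < a < h /\ 0 < b < h /\ 0 < c < h /\ 0 < d < h /\
    fij (P a b) = fji (P c d).
  move=> h hpos.
  pose D := f (P h h) - f (P h 0) - f (P 0 h) + f (P 0 0).
  have [a [Ea Ia]] : exists a, D = (fi (P a h) - fi (P a 0)) * (h - 0) /\ 0 < a < h.
    have -> : D = (f (P h h) - f (P h 0)) - (f (P 0 h) - f (P 0 0)) by rewrite /D; ring.
    apply: (MVT_cor2 (fun s => f (P s h) - f (P s 0)) (fun s => fi (P s h) - fi (P s 0)) 0 h) => // c _.
    rewrite /P; apply: dminus.
      apply: (@dext _ (fun s => f (shift (shift q j h) i s))) => [s|]; first by rewrite shiftC.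
      rewrite -shiftC; exact: part_at.
    apply: (@dext _ (fun s => f (shift (shift q j 0) i s))) => [s|]; first by rewrite shiftC.
    rewrite -shiftC; exact: part_at.
  have [b [Eb Ib]] : exists b, fi (P a h) - fi (P a 0) = fij (P a b) * (h - 0) /\ 0 < b < h.
    apply: (MVT_cor2 (fun t => fi (P a t)) (fun t => fij (P a t)) 0 h) => // c _.
    exact: part_at.
  have [d [Ed Id]] : exists d, D = (fj (P h d) - fj (P 0 d)) * (h - 0) /\ 0 < d < h.
    have -> : D = (f (P h h) - f (P 0 h)) - (f (P h 0) - f (P 0 0)) by rewrite /D; ring.
    apply: (MVT_cor2 (fun t => f (P h t) - f (P 0 t)) (fun t => fj (P h t) - fj (P 0 t)) 0 h) => // c _.
    apply: dminus; exact: part_at.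
  have [c [Ec Ic]] : exists c, fj (P h d) - fj (P 0 d) = fji (P c d) * (h - 0) /\ 0 < c < h.
    apply: (MVT_cor2 (fun s => fj (P s d)) (fun s => fji (P s d)) 0 h) => // c _.
    rewrite /P; apply: (@dext _ (fun s => fj (shift (shift q j d) i s))) => [s|]; first by rewrite shiftC.
    rewrite -shiftC; exact: part_at.
  exists a, b, c, d; do 4 (split; first by []).
  have hh : h * h <> 0 by nra.
  apply: (Rmult_eq_reg_r (h * h)) => //.
  have E : fij (P a b) * (h - 0) * (h - 0) = fji (P c d) * (h - 0) * (h - 0).
    by rewrite -Eb -Ec -Ea -Ed.
  transitivity (fij (P a b) * (h - 0) * (h - 0)); first ring.
  rewrite E; ring.
have close : forall s t k, Rabs (P s t k - q k) <= Rabs s + Rabs t.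
  move=> s t k; rewrite /P /shift; case: (k == i); case: (k == j); simpl; split_Rabs; lra.
have small : forall eps, 0 < eps -> Rabs (fij q - fji q) < 2 * eps.
  move=> eps he; case: (Cij q eps he) => d1 [d1p H1]; case: (Cji q eps he) => d2 [d2p H2].
  have hp : 0 < Rmin d1 d2 / 2 by apply: Rdiv_lt_0_compat; [apply: Rmin_pos|lra].
  case: (key _ hp) => a [b [c [d [Ia [Ib [Ic [Id E]]]]]]].
  have m1 := Rmin_l d1 d2; have m2 := Rmin_r d1 d2.
  have h1 : Rabs (fij (P a b) - fij q) < eps.
    apply: H1 => k; apply: (Rle_lt_trans _ _ _ (close a b k)); split_Rabs; lra.
  have h2 : Rabs (fji (P c d) - fji q) < eps.
    apply: H2 => k; apply: (Rle_lt_trans _ _ _ (close c d k)); split_Rabs; lra.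
  rewrite E in h1; split_Rabs; lra.
case: (Req_dec (fij q) (fji q)) => // hne.
have hpos : 0 < Rabs (fij q - fji q) / 4.
  apply: Rdiv_lt_0_compat; last lra. apply: Rabs_pos_lt; lra.
have := small _ hpos; lra.
Qed.

End Part_L2.

Section Part_L3.
Local Open Scope R_scope.

Lemma split_l m n (a : 'I_m) : @split m n (lshift n a) = inl a.
Proof. exact: (unsplitK (inl a)). Qed.
Lemma split_r m n (a : 'I_n) : @split m n (rshift m a) = inr a.
Proof. exact: (unsplitK (inr a)). Qed.

Lemma ord_split_ind m n (P : 'I_(m + n) -> Prop) :
  (forall a, P (lshift n a)) -> (forall b, P (rshift m b)) -> forall k, P k.
Proof. move=> hl hr k; rewrite -(splitK k); case: (split k) => a /=; [exact: hl|exact: hr]. Qed.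

Definition xs N S (z : vec (N + (S + S))) : vec N := fun a => z (lshift (S + S) a).
Definition qz N S (z : vec (N + (S + S))) : vec S := fun i => z (rshift N (lshift S i)).
Definition pz N S (z : vec (N + (S + S))) : vec S := fun i => z (rshift N (rshift S i)).

Section Shifts.
Variables N S : nat.
Implicit Type z : vec (N + (S + S)).
Lemma xs_l z b t : xs (shift z (lshift _ b) t) = shift (xs z) b t.
Proof. apply: functional_extensionality => k; by rewrite /xs /shift eq_lshift. Qed.
Lemma xs_r z c t : xs (shift z (rshift _ c) t) = xs z.
Proof. apply: functional_extensionality => k; by rewrite /xs /shift eq_lrshift Rplus_0_r. Qed.
Lemma qz_l z b t : qz (shift z (lshift _ b) t) = qz z.
Proof. apply: functional_extensionality => k; by rewrite /qz /shift eq_rlshift Rplus_0_r. Qed.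
Lemma qz_q z j t : qz (shift z (rshift _ (lshift _ j)) t) = shift (qz z) j t.
Proof. apply: functional_extensionality => k; by rewrite /qz /shift !eq_rshift eq_lshift. Qed.
Lemma qz_p z j t : qz (shift z (rshift _ (rshift _ j)) t) = qz z.
Proof. apply: functional_extensionality => k; by rewrite /qz /shift !eq_rshift eq_lrshift Rplus_0_r. Qed.
Lemma pz_l z b t : pz (shift z (lshift _ b) t) = pz z.
Proof. apply: functional_extensionality => k; by rewrite /pz /shift eq_rlshift Rplus_0_r. Qed.
Lemma pz_q z j t : pz (shift z (rshift _ (lshift _ j)) t) = pz z.
Proof. apply: functional_extensionality => k; by rewrite /pz /shift !eq_rshift eq_rlshift Rplus_0_r. Qed.
Lemma pz_p z j t : pz (shift z (rshift _ (rshift _ j)) t) = shift (pz z) j t.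
Proof. apply: functional_extensionality => k; by rewrite /pz /shift !eq_rshift. Qed.
End Shifts.

Lemma dshift n (x : vec n) b a t0 :
  derivable_pt_lim (fun t => shift x b t a) t0 (if a == b then 1 else 0).
Proof.
rewrite /shift; case: (a == b).
  apply: (@dext _ (fun t => x a + t * 1)) => [t|]; first ring. exact: dlin.
apply: (@dext _ (fun t => x a + t * 0)) => [t|]; first ring. exact: dlin.
Qed.

Lemma deq f x l1 l2 : derivable_pt_lim f x l1 -> l1 = l2 -> derivable_pt_lim f x l2.
Proof. by move=> h <-. Qed.

Lemma sum_ind n (c : 'I_n -> R) b :
  \big[Rplus/0]_(k < n) (c k * (if k == b then 1 else 0)) = c b.
Proof.
rewrite bigRE (bigD1 b) //= eqxx big1 => [|k /negbTE ->]; rewrite ?RmultE ?R1E ?R0E.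
  by rewrite GRing.mulr1 GRing.addr0.
by rewrite GRing.mulr0.
Qed.

End Part_L3.

Section Part_L4b.
Local Open Scope R_scope.

Lemma dquad_M n (Mt : R -> mat n n) (dM : mat n n) x :
  (forall a c, derivable_pt_lim (fun t => Mt t a c) 0 (dM a c)) ->
  derivable_pt_lim (fun t => quad (Mt t) x) 0 (quad dM x).
Proof.
move=> H; rewrite /quad; apply: dsum => a; apply: dsum => c.
apply: derivable_pt_lim_scal_right; exact: dscal.
Qed.

Lemma dquad_x n (M : mat n n) x b :
  derivable_pt_lim (fun t => quad M (shift x b t)) 0
    (\big[Rplus/0]_(c < n) (M b c * x c) + \big[Rplus/0]_(a < n) (x a * M a b)).
Proof.
rewrite /quad; apply: deq.
  apply: dsum => a; apply: dsum => c; apply: dmult; last exact: dshift.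
  apply: derivable_pt_lim_scal_right; exact: dshift.
cbv beta; rewrite shift0 !bigRE RplusE RmultE R0E R1E.
under eq_bigr => a _ do rewrite big_split.
rewrite big_split /=; congr (_ + _)%R.
  rewrite (bigD1 b) //= eqxx [X in (_ + X)%R]big1 ?GRing.addr0.
    by apply: eq_bigr => c _; rewrite GRing.mul1r.
  by move=> a /negbTE ->; apply: big1 => c _; rewrite !GRing.mul0r.
rewrite exchange_big (bigD1 b) //= eqxx [X in (_ + X)%R]big1 ?GRing.addr0.
  by apply: eq_bigr => a _; rewrite GRing.mulr1.
by move=> c /negbTE ->; apply: big1 => a _; rewrite !GRing.mulr0.
Qed.

End Part_L4b.

Section Part_L4.
Local Open Scope R_scope.

Section Jac.
Variables df ds : nat.
Local Notation N := (df + df)%N.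
Variable F3 : vec ds -> mat N N.
Variable G2 : 'I_ds -> vec ds -> mat N N.
Variable dFf : 'I_ds -> vec ds -> mat N N.
Variable dGf : 'I_ds -> 'I_ds -> vec ds -> mat N N.
Hypothesis hdF : forall a b j q, has_partial (fun w => F3 w a b) q j (dFf j q a b).
Hypothesis hdG : forall i a b j q, has_partial (fun w => G2 i w a b) q j (dGf i j q a b).

Definition Mi i q : mat N N := mmul (mtr (F3 q)) (G2 i q).
Definition dMi i j q : mat N N := fun b c =>
  \big[Rplus/0]_(k < N) (dFf j q k b * G2 i q k c + F3 q k b * dGf i j q k c).

Definition Ejac (z : vec (N + (ds + ds))) : mat (N + (ds + ds)) (N + (ds + ds)) :=
  fun k l =>
  let q := qz z in let x := xs z in
  match split k with
  | inl a => match split l with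
    | inl b => F3 q a b
    | inr c => match split c with
      | inl j => \big[Rplus/0]_(k0 < N) (dFf j q a k0 * x k0)
      | inr _ => 0 end end
  | inr r => match split r with
    | inl i => match split l with
      | inl _ => 0
      | inr c => match split c with
        | inl j => if i == j then 1 else 0
        | inr _ => 0 end end
    | inr i => match split l with
      | inl b => - / 2 * (\big[Rplus/0]_(c < N) (Mi i q b c * x c)
                          + \big[Rplus/0]_(a < N) (x a * Mi i q a b))
      | inr c => match split c with
        | inl j => - / 2 * quad (dMi i j q) x
        | inr j => if i == j then 1 else 0 end end end
  end.

Lemma Phi_x z a : Phi F3 G2 z (lshift _ a) = mvmul (F3 (qz z)) (xs z) a.
Proof. by rewrite /Phi split_l. Qed.
Lemma Phi_q z i : Phi F3 G2 z (rshift _ (lshift _ i)) = qz z i.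
Proof. by rewrite /Phi split_r split_l. Qed.
Lemma Phi_p z i : Phi F3 G2 z (rshift _ (rshift _ i)) =
   pz z i - / 2 * quad (Mi i (qz z)) (xs z).
Proof. by rewrite /Phi !split_r. Qed.


Lemma dMi_ok i j q b c :
  derivable_pt_lim (fun t => Mi i (shift q j t) b c) 0 (dMi i j q b c).
Proof.
rewrite /Mi /mmul /mtr /dMi; apply: deq.
  apply: dsum => k; apply: dmult; [exact: hdF | exact: hdG].
by cbv beta; rewrite shift0.
Qed.

Lemma Jac z k l : has_partial (fun w => Phi F3 G2 w k) z l (Ejac z k l).
Proof.
rewrite /has_partial.
move: k; apply: ord_split_ind => [a|r].
- apply: (@dext _ (fun t => mvmul (F3 (qz (shift z l t))) (xs (shift z l t)) a)) => [t|];
    first exact: Phi_x.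
  move: l; apply: ord_split_ind => [b|c].
  + rewrite /Ejac !split_l.
    apply: (@dext _ (fun t => mvmul (F3 (qz z)) (shift (xs z) b t) a)) => [t|];
      first by rewrite qz_l xs_l.
    rewrite /mvmul; apply: deq; [apply: dsum => k; apply: dscal; exact: dshift | exact: sum_ind].
  + move: c; apply: ord_split_ind => [j|j]; rewrite /Ejac split_l split_r ?split_l ?split_r.
    * apply: (@dext _ (fun t => mvmul (F3 (shift (qz z) j t)) (xs z) a)) => [t|];
        first by rewrite qz_q xs_r.
      rewrite /mvmul; apply: dsum => k; apply: derivable_pt_lim_scal_right; exact: hdF.
    * apply: (@dext _ (fun t => mvmul (F3 (qz z)) (xs z) a)) => [t|];
        first by rewrite qz_p xs_r.
      exact: dconst.
- move: r; apply: ord_split_ind => [i|i].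
  + apply: (@dext _ (fun t => qz (shift z l t) i)) => [t|]; first exact: Phi_q.
    move: l; apply: ord_split_ind => [b|c].
    * rewrite /Ejac split_r !split_l.
      apply: (@dext _ (fun t => qz z i)) => [t|]; [by rewrite qz_l | exact: dconst].
    * move: c; apply: ord_split_ind => [j|j]; rewrite /Ejac !split_r ?split_l ?split_r.
      - apply: (@dext _ (fun t => shift (qz z) j t i)) => [t|]; [by rewrite qz_q | exact: dshift].
      - apply: (@dext _ (fun t => qz z i)) => [t|]; [by rewrite qz_p | exact: dconst].
  + apply: (@dext _ (fun t => pz (shift z l t) i - / 2 * quad (Mi i (qz (shift z l t))) (xs (shift z l t))))
      => [t|]; first exact: Phi_p.
    move: l; apply: ord_split_ind => [b|c].
    * rewrite /Ejac !split_r split_l.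
      apply: (@dext _ (fun t => pz z i - / 2 * quad (Mi i (qz z)) (shift (xs z) b t))) => [t|];
        first by rewrite pz_l qz_l xs_l.
      apply: deq; first by apply: dminus; [exact: dconst | apply: dscal; exact: dquad_x].
      ring.
    * move: c; apply: ord_split_ind => [j|j]; rewrite /Ejac !split_r ?split_l ?split_r.
      - apply: (@dext _ (fun t => pz z i - / 2 * quad (Mi i (shift (qz z) j t)) (xs z))) => [t|];
          first by rewrite pz_q qz_q xs_r.
        apply: deq; first apply: dminus; [exact: dconst | apply: dscal; apply: dquad_M => b c; exact: dMi_ok | ring].
      - apply: (@dext _ (fun t => shift (pz z) j t i - / 2 * quad (Mi i (qz z)) (xs z))) => [t|];
          first by rewrite pz_p qz_p xs_r.
        apply: deq; first apply: dminus; [exact: dshift | exact: dconst | ring].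
Qed.

End Jac.

End Part_L4.

Section Part_L9.
Local Open Scope R_scope.

Lemma cont_const n c : continuous_vec (fun _ : vec n => c).
Proof. move=> x eps he; exists 1; split; first lra. move=> y _; rewrite Rminus_diag Rabs_R0; lra. Qed.

Lemma cont_plus n (f g : vec n -> R) : continuous_vec f -> continuous_vec g ->
  continuous_vec (fun q => f q + g q).
Proof.
move=> hf hg x eps he.
have he2 : 0 < eps / 2 by lra.
case: (hf x _ he2) => d1 [d1p H1]; case: (hg x _ he2) => d2 [d2p H2].
exists (Rmin d1 d2); split; first exact: Rmin_pos.
move=> y hy.
have h1 : Rabs (f y - f x) < eps / 2 by apply: H1 => k; have := hy k; have := Rmin_l d1 d2; lra.
have h2 : Rabs (g y - g x) < eps / 2 by apply: H2 => k; have := hy k; have := Rmin_r d1 d2; lra.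
split_Rabs; lra.
Qed.

Lemma cont_scal n c (g : vec n -> R) : continuous_vec g -> continuous_vec (fun q => c * g q).
Proof.
move=> hg x eps he.
case: (Req_dec c 0) => [->|hc].
  exists 1; split; first lra. move=> y _; rewrite !Rmult_0_l Rminus_diag Rabs_R0; lra.
have hca : 0 < Rabs c by apply: Rabs_pos_lt.
have he2 : 0 < eps / Rabs c by apply: Rdiv_lt_0_compat.
case: (hg x _ he2) => d [dp H]; exists d; split => // y hy.
have := H y hy => h.
rewrite -Rmult_minus_distr_l Rabs_mult.
have -> : eps = Rabs c * (eps / Rabs c) by field; lra.
by apply: Rmult_lt_compat_l.
Qed.

Lemma cont_ext n (f g : vec n -> R) : (forall q, f q = g q) -> continuous_vec g -> continuous_vec f.
Proof. move=> e hg x eps he; case: (hg x eps he) => d [dp H]; exists d; split => // y hy; rewrite !e; exact: H. Qed.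

Lemma cont_sum_seq m (I : Type) (r : seq I) (g : I -> vec m -> R) : (forall k, continuous_vec (g k)) ->
  continuous_vec (fun q => \big[Rplus/0]_(k <- r) g k q).
Proof.
move=> H; elim: r => [|a r IH].
  by apply: (@cont_ext _ _ (fun _ => 0)) => [q|]; [rewrite big_nil | exact: cont_const].
apply: (@cont_ext _ _ (fun q => g a q + \big[Rplus/0]_(k <- r) g k q)) => [q|]; first by rewrite big_cons.
exact: cont_plus.
Qed.

Lemma cont_sum m n (g : 'I_n -> vec m -> R) : (forall k, continuous_vec (g k)) ->
  continuous_vec (fun q => \big[Rplus/0]_(k < n) g k q).
Proof. exact: cont_sum_seq. Qed.

End Part_L9.

Section Part_L5.
Local Open Scope ring_scope.

Section Blk.
Variable K : comRingType.
Definition Jb n : 'M[K]_(n + n) := block_mx 0 1%:M (- 1%:M) 0.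

Lemma Jb_tr n : (Jb n)^T = - Jb n.
Proof.
by rewrite /Jb tr_block_mx !trmx0 trmx1 linearN /= trmx1 -[RHS]scaleN1r scale_block_mx !scaleN1r opprK !oppr0.
Qed.

Variables (n s : nat) (F : 'M[K]_n) (A : 'M[K]_(n, s)) (B : 'M[K]_(s, n)) (C : 'M[K]_s).
Variable Jn : 'M[K]_n.
Definition Eb : 'M[K]_(n + (s + s)) := block_mx F (row_mx A 0) (col_mx 0 B) (block_mx 1%:M 0 C 1%:M).
Definition bJ : 'M[K]_(n + (s + s)) := block_mx Jn 0 0 (Jb s).

Lemma Eb_form : Eb^T *m (bJ *m Eb) =
  block_mx (F^T *m (Jn *m F)) (row_mx (F^T *m (Jn *m A) - B^T) 0)
           (col_mx (A^T *m (Jn *m F) + B) 0)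
           (block_mx (A^T *m (Jn *m A) + C - C^T) 1%:M (- 1%:M) 0).
Proof.
rewrite /Eb /bJ /Jb.
rewrite !tr_block_mx tr_row_mx tr_col_mx !trmx0 !trmx1.
rewrite !mulmx_block ?mul0mx ?mulmx0 ?mul1mx ?mulmx1 ?add0r ?addr0 ?mulNmx ?mul1mx.
rewrite ?mul_block_col ?mul_mx_row ?mul_row_col ?mul_col_mx ?mul_row_block ?mul_col_row.
rewrite ?mul0mx ?mulmx0 ?mul1mx ?mulmx1 ?add0r ?addr0 ?mulmxN ?mulmx1 ?mul0mx ?mulNmx ?mul1mx ?oppr0.
rewrite mulmx0 addr0 mul_mx_row mulmxN mulmx1 mulmx0 add_row_mx addr0 mulmx0 addr0 add_col_mx addr0.
rewrite !add_row_mx ?addr0 ?add0r.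
congr block_mx; rewrite -block_mxEh -block_mxEv add_block_mx ?add0r ?addr0 ?addrA //.
Qed.

Lemma Eb_sympl (hJ : Jn^T = - Jn) :
  Eb^T *m (bJ *m Eb) = bJ <->
  [/\ F^T *m (Jn *m F) = Jn, F^T *m (Jn *m A) = B^T & A^T *m (Jn *m A) + C - C^T = 0].
Proof.
rewrite Eb_form /bJ /Jb; split.
  move/eq_block_mx => [h1 h2 h3 h4]; split => //.
    by move: h2; rewrite -row_mx0 => /eq_row_mx [/eqP]; rewrite subr_eq0 => /eqP.
  by move/eq_block_mx: h4 => [].
move=> [h1 h2 h3]; rewrite h1 h2 subrr h3 row_mx0.
have -> : A^T *m (Jn *m F) + B = 0.
  rewrite -[B]trmxK -h2 !trmx_mul trmxK hJ mulmxN mulNmx mulmxA.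
  by rewrite subrr.
by rewrite col_mx0.
Qed.
End Blk.

End Part_L5.

Section Part_L6.
Local Open Scope ring_scope.

Definition tM m n (A : mat m n) : 'M[R]_(m, n) := \matrix_(i, j) A i j.
Definition tv n (x : vec n) : 'cV[R]_n := \col_i x i.

Lemma tM_eq m n (A B : mat m n) : meq A B <-> tM A = tM B.
Proof.
split=> [h|h]; first by apply/matrixP => i j; rewrite !mxE h.
by move=> i j; move/matrixP: h => /(_ i j); rewrite !mxE.
Qed.

Lemma tM_mmul m n p (A : mat m n) (B : mat n p) : tM (mmul A B) = tM A *m tM B.
Proof. apply/matrixP => i j; rewrite !mxE /mmul bigRE; apply: eq_bigr => k _; by rewrite !mxE. Qed.

Lemma tM_mtr m n (A : mat m n) : tM (mtr A) = (tM A)^T.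
Proof. by apply/matrixP => i j; rewrite !mxE. Qed.

Lemma tM_mopp m n (A : mat m n) : tM (mopp A) = - tM A.
Proof. by apply/matrixP => i j; rewrite !mxE. Qed.

Lemma tM_J n : tM (Jmat n) = Jb R n.
Proof.
apply/matrixP => i j; rewrite mxE /Jb /Jmat.
move: i j; apply: ord_split_ind => a; apply: ord_split_ind => b;
  rewrite ?split_l ?split_r ?block_mxEul ?block_mxEur ?block_mxEdl ?block_mxEdr ?mxE //.
  by case: (a == b).
by case: (a == b); rewrite /= ?oppr0.
Qed.

Lemma tM_bigJ df ds : tM (bigJ df ds) = bJ ds (Jb R df).
Proof.
apply/matrixP => i j; rewrite mxE /bJ /bigJ.
move: i j; apply: ord_split_ind => a; apply: ord_split_ind => b;
  rewrite ?split_l ?split_r ?block_mxEul ?block_mxEur ?block_mxEdl ?block_mxEdr; try by rewrite mxE.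
all: by rewrite -tM_J mxE.
Qed.

Section EJ.
Variables df ds : nat.
Local Notation N := (df + df)%N.
Variable F3 : vec ds -> mat N N.
Variable G2 : 'I_ds -> vec ds -> mat N N.
Variable dFf : 'I_ds -> vec ds -> mat N N.
Variable dGf : 'I_ds -> 'I_ds -> vec ds -> mat N N.
Local Notation E := (Ejac F3 G2 dFf dGf).

Definition Am z : 'M[R]_(N, ds) := \matrix_(a, j) E z (lshift _ a) (rshift _ (lshift _ j)).
Definition Bm z : 'M[R]_(ds, N) := \matrix_(i, b) E z (rshift _ (rshift _ i)) (lshift _ b).
Definition Cm z : 'M[R]_ds := \matrix_(i, j) E z (rshift _ (rshift _ i)) (rshift _ (lshift _ j)).

Lemma tM_E z : tM (E z) = Eb (tM (F3 (qz z))) (Am z) (Bm z) (Cm z).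
Proof.
apply/matrixP => k l; rewrite mxE /Eb.
move: k l; apply: ord_split_ind => a; apply: ord_split_ind => b;
  rewrite ?block_mxEul ?block_mxEur ?block_mxEdl ?block_mxEdr.
- by rewrite mxE /Ejac !split_l.
- move: b; apply: ord_split_ind => b; rewrite ?row_mxEl ?row_mxEr !mxE //.
  by rewrite /Ejac split_l split_r split_r.
- move: a; apply: ord_split_ind => a; rewrite ?col_mxEu ?col_mxEd !mxE //.
  by rewrite /Ejac split_r split_l split_l.
- move: a b; apply: ord_split_ind => a; apply: ord_split_ind => b;
    rewrite ?block_mxEul ?block_mxEur ?block_mxEdl ?block_mxEdr !mxE /Ejac ?split_l ?split_r ?split_l ?split_r ?split_l //.
  all: by case: (a == b).
Qed.
End EJ.

End Part_L6.

Section Part_L7.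
Local Open Scope ring_scope.

Definition cmat n s (U : 'I_s -> 'cV[R]_n) : 'M[R]_(n, s) := \matrix_(a, j) U j a ord0.

Lemma mul_cmat m n s (X : 'M[R]_(m, n)) (U : 'I_s -> 'cV[R]_n) b j :
  (X *m cmat U) b j = (X *m U j) b ord0.
Proof. rewrite !mxE; apply: eq_bigr => k _; by rewrite !mxE. Qed.

Lemma tr_cmat n s (U : 'I_s -> 'cV[R]_n) (Y : 'M[R]_n) i j :
  ((cmat U)^T *m Y *m cmat U) i j = ((U i)^T *m Y *m U j) ord0 ord0.
Proof.
rewrite mul_cmat !mxE; apply: eq_bigr => k _; rewrite !mxE.
rewrite (eq_bigr (fun l => U i l ord0 * Y l k)); last by move=> l _; rewrite !mxE.
rewrite [in RHS](eq_bigr (fun l => U i l ord0 * Y l k)) //; by move=> l _; rewrite !mxE.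
Qed.

Lemma quadE n (M : mat n n) x : quad M x = ((tv x)^T *m tM M *m tv x) ord0 ord0.
Proof.
rewrite /quad !mxE bigRE exchange_big; apply: eq_bigr => b _.
rewrite !mxE bigRE mulr_suml; apply: eq_bigr => a _; by rewrite !mxE.
Qed.

Lemma sum_mv n (M : mat n n) x b : \big[Rplus/0]_(c < n) (Rmult (M b c) (x c)) = (tM M *m tv x) b ord0.
Proof. rewrite bigRE !mxE; apply: eq_bigr => c _; by rewrite !mxE. Qed.
Lemma sum_vm n (M : mat n n) x b : \big[Rplus/0]_(a < n) (Rmult (x a) (M a b)) = ((tM M)^T *m tv x) b ord0.
Proof. rewrite bigRE !mxE; apply: eq_bigr => c _; rewrite !mxE; exact: mulrC. Qed.

Lemma sc_tr n (u v : 'cV[R]_n) (Y : 'M[R]_n) :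
  (u^T *m Y *m v) ord0 ord0 = (v^T *m Y^T *m u) ord0 ord0.
Proof.
transitivity ((u^T *m Y *m v)^T ord0 ord0); first by rewrite [RHS]mxE.
by rewrite !trmx_mul trmxK mulmxA.
Qed.

Lemma JbJb n : Jb R n *m Jb R n = - 1%:M.
Proof.
rewrite /Jb mulmx_block ?mul0mx ?mulmx0 ?add0r ?addr0 ?mulmx1 ?mul1mx ?mulNmx ?mulmxN ?mul1mx ?mulmx1.
by rewrite [in RHS]scalar_mx_block opp_block_mx !oppr0.
Qed.

Lemma F_cancel n (F Y : 'M[R]_(n + n)) :
  F^T *m (Jb R n *m F) = Jb R n -> F^T *m Y = 0 -> Y = 0.
Proof.
move=> hF hY.
set L := - (Jb R n *m F^T *m Jb R n).
have LF : L *m F = 1%:M.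
  by rewrite /L mulNmx -!mulmxA hF JbJb opprK.
have FL := mulmx1C LF.
have LtFt : L^T *m F^T = 1%:M by rewrite -trmx_mul FL trmx1.
by rewrite -[Y]mul1mx -LtFt -mulmxA hY mulmx0.
Qed.

End Part_L7.

Section Part_L8.
Local Open Scope ring_scope.

Section Ents.
Variables df ds : nat.
Local Notation N := (df + df)%N.
Variable F3 : vec ds -> mat N N.
Variable G2 : 'I_ds -> vec ds -> mat N N.
Variable dFf : 'I_ds -> vec ds -> mat N N.
Variable dGf : 'I_ds -> 'I_ds -> vec ds -> mat N N.

Lemma Am_cmat z : Am F3 G2 dFf dGf z = cmat (fun j => tM (dFf j (qz z)) *m tv (xs z)).
Proof.
apply/matrixP => a j; rewrite !mxE /Ejac split_l split_r split_l bigRE.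
by apply: eq_bigr => k _; rewrite !mxE.
Qed.

Lemma Bm_ent z i b : (forall c d, Mi F3 G2 i (qz z) c d = Mi F3 G2 i (qz z) d c) ->
  Bm F3 G2 dFf dGf z i b = - (tM (Mi F3 G2 i (qz z)) *m tv (xs z)) b ord0.
Proof.
move=> hs; rewrite [LHS]mxE /Ejac !split_r split_l.
have -> : \big[Rplus/(IZR 0%Z)]_(a < N) Rmult (xs z a) (Mi F3 G2 i (qz z) a b)
        = \big[Rplus/(IZR 0%Z)]_(c < N) Rmult (Mi F3 G2 i (qz z) b c) (xs z c).
  by apply: eq_bigr => a _; rewrite hs Rmult_comm.
rewrite sum_mv.
set X := (tM _ *m _) b ord0.
change (Rmult (Ropp (Rinv 2)) (Rplus X X) = Ropp X); field.
Qed.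

Lemma Cm_ent z i j :
  Cm F3 G2 dFf dGf z i j = Rmult (Ropp (Rinv (IZR 2%Z))) (((tv (xs z))^T *m tM (dMi F3 G2 dFf dGf i j (qz z)) *m tv (xs z)) ord0 ord0).
Proof. by rewrite [LHS]mxE /Ejac !split_r split_l quadE. Qed.

Lemma tM_dMi i j q : tM (dMi F3 G2 dFf dGf i j q) =
  (tM (dFf j q))^T *m tM (G2 i q) + (tM (F3 q))^T *m tM (dGf i j q).
Proof.
apply/matrixP => b c; rewrite !mxE /dMi bigRE big_split /=.
by congr (_ + _); apply: eq_bigr => k _; rewrite !mxE.
Qed.
End Ents.

End Part_L8.

Section Part_L10.
Local Open Scope ring_scope.

Definition zof n s (x : vec n) (q : vec s) : vec (n + (s + s)) :=
  fun k => match split k with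
  | inl a => x a
  | inr r => match split r with inl i => q i | inr _ => 0%R end end.
Lemma xs_zof n s (x : vec n) (q : vec s) : xs (zof x q) = x.
Proof. by apply: functional_extensionality => a; rewrite /xs /zof split_l. Qed.
Lemma qz_zof n s (x : vec n) (q : vec s) : qz (zof x q) = q.
Proof. by apply: functional_extensionality => a; rewrite /qz /zof split_r split_l. Qed.

Lemma col_zero m n (X : 'M[R]_(m, n)) : (forall x : vec n, X *m tv x = 0) -> X = 0.
Proof.
move=> H; apply/matrixP => a b.
have e : tv (fun c => (delta_mx b ord0 : 'cV[R]_n) c ord0) = delta_mx b ord0.
  by apply/matrixP => c d; rewrite (ord1 d) mxE.
have := H (fun c => (delta_mx b ord0 : 'cV[R]_n) c ord0); rewrite e -colE.
by move/matrixP => /(_ a ord0); rewrite !mxE.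
Qed.

Section Main.
Variables df ds : nat.
Local Notation N := (df + df)%N.
Variable F3 : vec ds -> mat N N.
Variable G2 : 'I_ds -> vec ds -> mat N N.
Variable dFf : 'I_ds -> vec ds -> mat N N.
Variable dGf : 'I_ds -> 'I_ds -> vec ds -> mat N N.
Hypothesis hdF : forall a b j q, has_partial (fun w => F3 w a b) q j (dFf j q a b).
Hypothesis hdG : forall i a b j q, has_partial (fun w => G2 i w a b) q j (dGf i j q a b).

Lemma sympl_at z :
  meq (mmul (mtr (Ejac F3 G2 dFf dGf z)) (mmul (bigJ df ds) (Ejac F3 G2 dFf dGf z))) (bigJ df ds) <->
  [/\ (tM (F3 (qz z)))^T *m (Jb R df *m tM (F3 (qz z))) = Jb R df,
      (tM (F3 (qz z)))^T *m (Jb R df *m Am F3 G2 dFf dGf z) = (Bm F3 G2 dFf dGf z)^T &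
      (Am F3 G2 dFf dGf z)^T *m (Jb R df *m Am F3 G2 dFf dGf z) + Cm F3 G2 dFf dGf z - (Cm F3 G2 dFf dGf z)^T = 0].
Proof. rewrite tM_eq !tM_mmul tM_mtr tM_bigJ tM_E; exact: Eb_sympl (Jb_tr _ _). Qed.


Hypothesis Hsym : forall i q, symmetric_mx (mmul (mtr (F3 q)) (G2 i q)).

Lemma dir1 : symplectic_map (Phi F3 G2) -> forall q, symplectic_mx (F3 q) /\
   (forall (i : 'I_ds) (dF : mat N N),
        (forall a b, has_partial (fun w => F3 w a b) q i (dF a b)) ->
        meq (G2 i q) (mopp (mmul (Jmat df) dF))).
Proof.
move=> Hs q.
have hz : forall x, _ := fun x => (sympl_at (zof x q)).1 (Hs (zof x q) _ (Jac hdF hdG (zof x q))).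
have [h1 _ _] := hz (fun _ => 0%R); rewrite qz_zof in h1.
split; first by apply/tM_eq; rewrite !tM_mmul tM_mtr tM_J.
move=> i dF hp.
have edF : tM dF = tM (dFf i q).
  by apply/matrixP => a b; rewrite !mxE; exact: part_uniq (hp a b) (hdF a b i q).
apply/tM_eq; rewrite tM_mopp tM_mmul tM_J edF.
set F := tM (F3 q).
have key : forall x, (F^T *m (Jb R df *m tM (dFf i q)) + F^T *m tM (G2 i q)) *m tv x = 0.
  move=> x; have [_ h2 _] := hz x.
  apply/matrixP => b c; rewrite (ord1 c) {c}.
  move/matrixP: h2 => /(_ b i).
  rewrite Am_cmat mulmxA mul_cmat [RHS]mxE Bm_ent; last by move=> c d; exact: Hsym.
  rewrite /Mi tM_mmul tM_mtr !qz_zof !xs_zof -/F => h2.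
  by rewrite mulmxDl [LHS]mxE mulmxA -[F^T *m Jb R df *m _ *m _]mulmxA h2 addNr mxE.
have := col_zero key; rewrite -mulmxDr => /(F_cancel h1) /eqP.
by rewrite addr_eq0 => /eqP ->; rewrite opprK.
Qed.

Hypothesis cdG : forall i j a b, continuous_vec (fun q => dGf i j q a b).

Lemma tME m n (A : mat m n) i j : tM A i j = A i j.
Proof. by rewrite mxE. Qed.

Lemma oppmxE m n (A : 'M[R]_(m, n)) i j : (- A) i j = - A i j.
Proof. by rewrite mxE. Qed.

Lemma addmxE m n (A B : 'M[R]_(m, n)) i j : (A + B) i j = A i j + B i j.
Proof. by rewrite mxE. Qed.
Lemma trmxE m n (A : 'M[R]_(m, n)) i j : A^T i j = A j i.
Proof. by rewrite mxE. Qed.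

Lemma sG n (xv : 'cV[R]_(n + n)) (P Q : 'M[R]_(n + n)) :
  (xv^T *m (P^T *m - (Jb R n *m Q)) *m xv) ord0 ord0 = ((Q *m xv)^T *m Jb R n *m (P *m xv)) ord0 ord0.
Proof.
rewrite [RHS]sc_tr Jb_tr !mulmxN !mulNmx !oppmxE; congr (- _).
by rewrite !trmx_mul ?trmxK !mulmxA.
Qed.

Lemma sD n (xv : 'cV[R]_n) (P Q : 'M[R]_n) :
  (xv^T *m (P + Q) *m xv) ord0 ord0 = (xv^T *m P *m xv) ord0 ord0 + (xv^T *m Q *m xv) ord0 ord0.
Proof. by rewrite mulmxDr mulmxDl mxE. Qed.

Lemma JJc n (X : 'M[R]_(n + n)) : X = - (Jb R n *m (Jb R n *m X)).
Proof. by rewrite mulmxA JbJb mulNmx mul1mx opprK. Qed.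

Lemma dir2 : (forall q, symplectic_mx (F3 q) /\
   (forall (i : 'I_ds) (dF : mat N N),
        (forall a b, has_partial (fun w => F3 w a b) q i (dF a b)) ->
        meq (G2 i q) (mopp (mmul (Jmat df) dF)))) -> symplectic_map (Phi F3 G2).
Proof.
move=> H.
have hG : forall i q, tM (G2 i q) = - (Jb R df *m tM (dFf i q)).
  move=> i q; have [_ h] := H q; move/tM_eq: (h i (dFf i q) (fun a b => hdF a b i q)).
  by rewrite tM_mopp tM_mmul tM_J.
have hdFG : forall i q, tM (dFf i q) = Jb R df *m tM (G2 i q).
  by move=> i q; rewrite hG mulmxN -JJc.
have pJG : forall i j w a b, has_partial (fun w => dFf i w a b) w j ((Jb R df *m tM (dGf i j w)) a b).
  move=> i j w a b; rewrite /has_partial.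
  apply: (@dext _ (fun t => \big[Rplus/(IZR 0%Z)]_(k < N) Rmult (Jb R df a k) (G2 i (shift w j t) k b))).
    move=> t; have := hdFG i (shift w j t) => /matrixP /(_ a b); rewrite tME => ->.
    by rewrite [LHS]mxE; apply: eq_bigr => k _; rewrite tME.
  apply: deq; first by apply: dsum => k; apply: dscal; exact: hdG.
  by rewrite [RHS]mxE; apply: eq_bigr => k _; rewrite tME.
have cJG : forall i j a b, continuous_vec (fun w => (Jb R df *m tM (dGf i j w)) a b).
  move=> i j a b.
  apply: (@cont_ext _ _ (fun w => \big[Rplus/(IZR 0%Z)]_(k < N) Rmult (Jb R df a k) (dGf i j w k b))).
    by move=> w; rewrite [LHS]mxE; apply: eq_bigr => k _; rewrite tME.
  apply: cont_sum => k; apply: cont_scal; exact: cdG.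
have hdGs : forall i j q, tM (dGf i j q) = tM (dGf j i q).
  move=> i j q; rewrite (JJc (tM (dGf i j q))) (JJc (tM (dGf j i q))); congr (- (_ *m _)).
  apply/matrixP => a b.
  apply (@schwarz _ (fun w => F3 w a b) (fun w => dFf i w a b) (fun w => dFf j w a b)
    (fun w => (Jb R df *m tM (dGf i j w)) a b) (fun w => (Jb R df *m tM (dGf j i w)) a b) i j q).
  - move=> w; exact: (hdF a b i w).
  - move=> w; exact: (hdF a b j w).
  - move=> w; exact: (pJG i j w a b).
  - move=> w; exact: (pJG j i w a b).
  - exact: cJG.
  - exact: cJG.
move=> z D HD.
have eD : tM D = tM (Ejac F3 G2 dFf dGf z).
  apply/matrixP => a b; rewrite !tME; exact: part_uniq (HD a b) (Jac hdF hdG z a b).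
apply/tM_eq; rewrite !tM_mmul tM_mtr eD -tM_mtr -!tM_mmul; apply/tM_eq; apply/sympl_at.
set q := qz z; set x := xs z; set F := tM (F3 q).
split.
- have [h _] := H q; move/tM_eq: h; by rewrite !tM_mmul tM_mtr tM_J.
- apply/matrixP => b j.
  rewrite Am_cmat mulmxA mul_cmat [RHS]mxE Bm_ent; last by move=> c d; exact: Hsym.
  rewrite /Mi tM_mmul tM_mtr hG mulmxN mulNmx oppmxE opprK !mulmxA //.
suff E : (Am F3 G2 dFf dGf z)^T *m (Jb R df *m Am F3 G2 dFf dGf z) =
   (Cm F3 G2 dFf dGf z)^T - Cm F3 G2 dFf dGf z by rewrite E subrK subrr.
apply/matrixP => i j.
rewrite mulmxA Am_cmat tr_cmat addmxE oppmxE trmxE !Cm_ent !tM_dMi !sD (hdGs j i) !hG !sG.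
set u := fun k => tM (dFf k (qz z)) *m tv (xs z).
rewrite -/(u i) -/(u j).
set a := ((u i)^T *m Jb R df *m u j) ord0 ord0.
set b' := ((u j)^T *m Jb R df *m u i) ord0 ord0.
set r := (_ *m _ *m _) ord0 ord0.
have e : b' = - a by rewrite /b' sc_tr Jb_tr mulmxN mulNmx oppmxE.
rewrite e.
have fin : forall A Rr : R, A = Rminus (Rmult (Ropp (Rinv (IZR 2))) (Rplus (Ropp A) Rr)) (Rmult (Ropp (Rinv (IZR 2))) (Rplus A Rr)).
  by move=> A Rr; field.
exact (fin a r).
Qed.
End Main.

End Part_L10.

Unset Implicit Arguments.

Theorem lemma3p1 (df ds : nat)
    (F3 : vec ds -> mat (df + df)%N (df + df)%N)
    (G2 : 'I_ds -> vec ds -> mat (df + df)%N (df + df)%N)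
    (HF3 : forall a b : 'I_(df + df)%N, C1_vec (fun q : vec ds => F3 q a b))
    (HG2 : forall (i : 'I_ds) (a b : 'I_(df + df)%N), C1_vec (fun q : vec ds => G2 i q a b))
    (Hsym : forall i q, symmetric_mx (mmul (mtr (F3 q)) (G2 i q))) :
  symplectic_map (Phi F3 G2) <->
  (forall q : vec ds,
     symplectic_mx (F3 q) /\
     (forall (i : 'I_ds) (dF : mat (df + df)%N (df + df)%N),
        (forall a b, has_partial (fun w => F3 w a b) q i (dF a b)) ->
        meq (G2 i q) (mopp (mmul (Jmat df) dF)))).
Proof.
pose cF a b := constructive_indefinite_description _ (HF3 a b).
pose dFf := fun j q a b => proj1_sig (cF a b) j q.
have hdF : forall a b j q, has_partial (fun w => F3 w a b) q j (dFf j q a b).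
  by move=> a b j q; exact: (proj1 (proj2_sig (cF a b)) j q).
pose cG i a b := constructive_indefinite_description _ (HG2 i a b).
pose dGf := fun i j q a b => proj1_sig (cG i a b) j q.
have hdG : forall i a b j q, has_partial (fun w => G2 i w a b) q j (dGf i j q a b).
  by move=> i a b j q; exact: (proj1 (proj2_sig (cG i a b)) j q).
have cdG : forall i j a b, continuous_vec (fun q => dGf i j q a b).
  by move=> i j a b; exact: (proj2 (proj2_sig (cG i a b)) j).
split; [exact: (dir1 hdF hdG Hsym) | exact: (dir2 hdF hdG Hsym cdG)].
Qed.
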